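(* Let $C\subseteq F^n$ be a binary perfect code of length $n=2^k-1$ containing $0^n$, and let $\lambda:C\to\{0,1\}$ be any function with $\lambda(0^n)=0$. Let $V_C^\lambda=\{(x+y,\ |x|+\lambda(y),\ x)\mid x\in F^n,\ y\in C\}\subseteq F^{2n+1}$ be the Vasil'ev code, where $|x|=x_1+\dots+x_n \pmod 2$. Let $y'\in C$ and $z=(y',\lambda(y'),0^n)\in V_C^\lambda$. A permutation $\rho_z\in S_{2n+1}$ belongs to $St_{n+1}(\mathrm{Rot}_z(V_C^\lambda))$ if and only if it can be written as $\rho_z=\sigma_{\pi_{y'}}\circ\tau_u$ for some $\pi_{y'}\in \mathrm{Rot}_{y'}(C)$ and some $u\in F^n$ such that for every $y\in C$ $$\lambda(y')+\lambda(y)+\lambda(y'+\pi_{y'}(y))=u\cdot y,$$ where $u\cdot y$ is the scalar product over $\mathbb{F}_2$.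
   Context: $F^n$ is the space of binary vectors of length $n$ with the Hamming metric. A binary code $C\subseteq F^n$ is perfect (1-error-correcting) if every $x\in F^n$ is at distance at most one from exactly one codeword. Permutations $\pi\in S_n$ act on vectors by permuting coordinates. For a code $D$ of length $m$ and a vector $z$, $\mathrm{Rot}_z(D)=\{\pi\in S_m\mid z+\pi(D)=D\}$, and $St_{i}(\mathrm{Rot}_z(D))$ denotes the set of permutations in $\mathrm{Rot}_z(D)$ fixing the coordinate $i$. For $i\in\{1,\dots,n\}$ let $t_i$ be the transposition of coordinates $i$ and $i+n+1$ in $S_{2n+1}$, and for $u\in F^n$ let $\tau_u=\prod_{i\in \mathrm{supp}(u)}t_i$. For $\pi\in S_n$ the duplicator $\sigma_\pi\in S_{2n+1}$ maps $i\mapsto\pi(i)$ and $i+n+1\mapsto \pi(i)+n+1$ for $1\le i\le n$, and fixes $n+1$. Composition $\sigma\circ\tau$ means $\tau$ is applied first. *)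

(* Defs.v *)
From mathcomp Require Import all_boot all_fingroup.
Set Implicit Arguments. Unset Strict Implicit. Unset Printing Implicit Defensive.

Definition bvec (n : nat) := {ffun 'I_n -> bool}.

Definition bzero (n : nat) : bvec n := [ffun => false].
Definition vadd (n : nat) (x y : bvec n) : bvec n := [ffun i => x i (+) y i].

Definition hdist (n : nat) (x y : bvec n) : nat := #|[set i | x i != y i]|.

Definition perfect (n : nat) (C : {set bvec n}) : Prop :=
  forall x : bvec n, #|[set c in C | hdist x c <= 1]| = 1.

Definition wt2 (n : nat) (x : bvec n) : bool := \big[addb/false]_(i < n) x i.

Definition dot (n : nat) (u y : bvec n) : bool := \big[addb/false]_(i < n) (u i && y i).

(* action of permutations on vectors: (pi x)_{pi i} = x_i *)
Definition permv (m : nat) (pi : {perm 'I_m}) (x : bvec m) : bvec m :=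
  [ffun j => x ((pi^-1)%g j)].

Definition Rot (m : nat) (z : bvec m) (D : {set bvec m}) : {set {perm 'I_m}} :=
  [set pi : {perm 'I_m} | [set vadd z (permv pi x) | x in D] == D].

Definition St (m : nat) (i : 'I_m) (S : {set {perm 'I_m}}) : {set {perm 'I_m}} :=
  [set pi in S | pi i == i].

(* F^{2n+1}, coordinates 'I_(n + (1 + n)): the block lshift j is coordinate
   j+1 (1-based), the middle one is coordinate n+1, and rshift n (rshift 1 j)
   is coordinate j+n+2. *)
Definition I2 (n : nat) := 'I_(n + (1 + n)).

Definition midx (n : nat) : I2 n := unsplit (inr (unsplit (inl (@ord0 0)))).
Definition lidx (n : nat) (j : 'I_n) : I2 n := unsplit (inl j).
Definition ridx (n : nat) (j : 'I_n) : I2 n := unsplit (inr (unsplit (inr j))).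

Definition vec3 (n : nat) (a : bvec n) (b : bool) (c : bvec n) : bvec (n + (1 + n)) :=
  [ffun i => match split i with
             | inl j => a j
             | inr k => match split k with inl _ => b | inr j => c j end
             end].

Definition vasilev (n : nat) (C : {set bvec n}) (lam : bvec n -> bool)
  : {set bvec (n + (1 + n))} :=
  [set vec3 (vadd x y) (wt2 x (+) lam y) x | x : bvec n, y : bvec n in C].

Definition tr (n : nat) (j : 'I_n) : {perm I2 n} := tperm (lidx j) (ridx j).
Definition tau (n : nat) (u : bvec n) : {perm I2 n} :=
  (\prod_(j < n | u j) tr j)%g.

Definition dupf (n : nat) (pi : {perm 'I_n}) (i : I2 n) : I2 n :=
  match split i with
  | inl j => lidx (pi j)
  | inr k => match split k with
             | inl _ => midx n
             | inr j => ridx (pi j)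
             end
  end.

Lemma dupfK (n : nat) (pi : {perm 'I_n}) : cancel (dupf pi) (dupf (pi^-1)%g).
Proof.
move=> i; rewrite -(splitK i); case: (split i) => [j|k].
  by rewrite /dupf /lidx !unsplitK permK.
rewrite -(splitK k); case: (split k) => [u|j].
  rewrite /dupf /midx !unsplitK; congr (unsplit (inr (unsplit (inl _)))).
  by apply/val_inj; case: u => [[]].
by rewrite /dupf /ridx !unsplitK permK.
Qed.

Lemma dupf_inj (n : nat) (pi : {perm 'I_n}) : injective (dupf pi).
Proof. exact: can_inj (dupfK pi). Qed.

Definition sigma (n : nat) (pi : {perm 'I_n}) : {perm I2 n} := perm (@dupf_inj n pi).

(* Main.v *)
Require Import Defs.
From mathcomp Require Import all_boot all_fingroup.
Set Implicit Arguments. Unset Strict Implicit. Unset Printing Implicit Defensive.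

Section Idx.
Variable n : nat.

Lemma lidx_inj : injective (@lidx n).
Proof. by move=> a b /(congr1 split); rewrite /lidx !unsplitK => -[]. Qed.
Lemma ridx_inj : injective (@ridx n).
Proof.
move=> a b /(congr1 val) /= /eqP; rewrite !eqn_add2l => /eqP; exact: val_inj.
Qed.
Lemma lidx_ridx a b : (lidx a == ridx b :> I2 n) = false.
Proof. by apply/eqP => /(congr1 split); rewrite /lidx /ridx !unsplitK. Qed.
Lemma ridx_lidx a b : (ridx a == lidx b :> I2 n) = false.
Proof. by rewrite eq_sym lidx_ridx. Qed.
Lemma lidx_midx a : (lidx a == midx n) = false.
Proof. by apply/eqP => /(congr1 split); rewrite /lidx /midx !unsplitK. Qed.
Lemma ridx_midx a : (ridx a == midx n) = false.
Proof.
apply/eqP => /(congr1 val) /= /eqP; rewrite !eqn_add2l.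
done.
Qed.
Lemma lidx_eq a b : (lidx a == lidx b :> I2 n) = (a == b).
Proof. by apply/eqP/eqP => [/lidx_inj|->]. Qed.
Lemma ridx_eq a b : (ridx a == ridx b :> I2 n) = (a == b).
Proof. by apply/eqP/eqP => [/ridx_inj|->]. Qed.

Variant idx_spec : I2 n -> Type :=
 | IdxL a : idx_spec (lidx a)
 | IdxM : idx_spec (midx n)
 | IdxR a : idx_spec (ridx a).

Lemma idxP t : idx_spec t.
Proof.
rewrite -(splitK t); case: (split t) => [a|k]; first exact: IdxL.
rewrite -(splitK k); case: (split k) => [o|a]; last exact: IdxR.
have -> : o = ord0 by apply/val_inj; case: o => [[]].
exact: IdxM.
Qed.

Lemma vec3_l (a c : bvec n) (b : bool) j : vec3 a b c (lidx j) = a j.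
Proof. by rewrite ffunE /lidx unsplitK. Qed.
Lemma vec3_m (a c : bvec n) (b : bool) : vec3 a b c (midx n) = b.
Proof. by rewrite ffunE /midx !unsplitK. Qed.
Lemma vec3_r (a c : bvec n) (b : bool) j : vec3 a b c (ridx j) = c j.
Proof. by rewrite ffunE /ridx !unsplitK. Qed.

Lemma vec3_eta (w : bvec (n + (1 + n))) :
  w = vec3 [ffun j => w (lidx j)] (w (midx n)) [ffun j => w (ridx j)].
Proof.
apply/ffunP => t; case: (idxP t) => [a||a];
  by rewrite ?vec3_l ?vec3_m ?vec3_r ?ffunE.
Qed.

Lemma vec3_inj (a c a' c' : bvec n) b b' : vec3 a b c = vec3 a' b' c' -> [/\ a = a', b = b' & c = c'].
Proof.
move=> E; split.
- by apply/ffunP => j; rewrite -(vec3_l a c b) E vec3_l.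
- by rewrite -(vec3_m a c b) E vec3_m.
- by apply/ffunP => j; rewrite -(vec3_r a c b) E vec3_r.
Qed.

Lemma mem_vasilev (C : {set bvec n}) lam (A B : bvec n) b :
  (vec3 A b B \in vasilev C lam) = (vadd A B \in C) && (b == wt2 B (+) lam (vadd A B)).
Proof.
apply/imset2P/andP => [[x y _ yC /vec3_inj [-> -> ->]]|[AB /eqP ->]].
  have -> : vadd (vadd x y) x = y by apply/ffunP => j; rewrite !ffunE addbAC addbb.
  by split.
exists B (vadd A B) => //.
have -> : vadd B (vadd A B) = A by apply/ffunP => j; rewrite !ffunE addbCA addbb addbF.
done.
Qed.

Lemma permv_eq m (rho : {perm 'I_m}) (x y : bvec m) : (forall t, y (rho t) = x t) -> permv rho x = y.
Proof. by move=> H; apply/ffunP => j; rewrite ffunE -H permKV. Qed.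

Lemma permvE m (rho : {perm 'I_m}) (x : bvec m) t : permv rho x (rho t) = x t.
Proof. by rewrite ffunE permK. Qed.

Lemma permvM m (s t : {perm 'I_m}) (x : bvec m) : permv (s * t)%g x = permv t (permv s x).
Proof. by apply/ffunP => j; rewrite !ffunE invMg permM. Qed.

Lemma sigmaL (pi : {perm 'I_n}) j : sigma pi (lidx j) = lidx (pi j).
Proof. by rewrite permE /dupf /lidx unsplitK. Qed.
Lemma sigmaM (pi : {perm 'I_n}) : sigma pi (midx n) = midx n.
Proof. by rewrite permE /dupf /midx !unsplitK. Qed.
Lemma sigmaR (pi : {perm 'I_n}) j : sigma pi (ridx j) = ridx (pi j).
Proof. by rewrite permE /dupf /ridx !unsplitK. Qed.

Lemma tauP_seq (u : bvec n) (r : seq 'I_n) : uniq r ->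
  let T := (\prod_(j <- r | u j) tr j)%g in
  [/\ forall i, T (lidx i) = if u i && (i \in r) then ridx i else lidx i,
      forall i, T (ridx i) = if u i && (i \in r) then lidx i else ridx i
    & T (midx n) = midx n].
Proof.
elim: r => [|j r IH] /=.
  by rewrite !big_nil; split => [i|i|]; rewrite perm1 ?andbF.
case/andP => jr /IH [IL IR IM]; rewrite big_cons.
case uj: (u j).
- split => [i|i|]; rewrite permM [tr j]/tr.
  + case: (eqVneq i j) => [->|ij]; first by rewrite tpermL IR uj (negbTE jr) in_cons eqxx.
    rewrite tpermD ?lidx_eq ?ridx_lidx 1?eq_sym //.
    by rewrite IL in_cons (negbTE ij).
  + case: (eqVneq i j) => [->|ij]; first by rewrite tpermR IL uj (negbTE jr) in_cons eqxx.
    rewrite tpermD ?ridx_eq ?lidx_ridx 1?eq_sym //.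
    by rewrite IR in_cons (negbTE ij).
  + by rewrite tpermD ?lidx_midx ?ridx_midx.
- split => [i|i|//]; rewrite ?IL ?IR in_cons;
  by case: (eqVneq i j) => [->|_]; rewrite ?uj.
Qed.

Lemma tauL (u : bvec n) i : tau u (lidx i) = if u i then ridx i else lidx i.
Proof.
have [H _ _] := tauP_seq u (index_enum_uniq 'I_n).
by rewrite /tau H mem_index_enum andbT.
Qed.
Lemma tauR (u : bvec n) i : tau u (ridx i) = if u i then lidx i else ridx i.
Proof.
have [_ H _] := tauP_seq u (index_enum_uniq 'I_n).
by rewrite /tau H mem_index_enum andbT.
Qed.
Lemma tauM (u : bvec n) : tau u (midx n) = midx n.
Proof. by have [_ _ H] := tauP_seq u (index_enum_uniq 'I_n). Qed.

End Idx.

Section B.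
Variable n : nat.

Definition ev (i : 'I_n) : bvec n := [ffun j => j == i].

Lemma wt2_perm (pi : {perm 'I_n}) (w : bvec n) : wt2 (permv pi w) = wt2 w.
Proof.
rewrite /wt2 (reindex_inj (@perm_inj _ pi)); apply: eq_bigr => j _.
by rewrite permvE.
Qed.

Lemma wt2_add (a b : bvec n) : wt2 (vadd a b) = wt2 a (+) wt2 b.
Proof. by rewrite /wt2 -big_split; apply: eq_bigr => j _; rewrite ffunE. Qed.

Lemma dotE (u y : bvec n) : dot u y = wt2 [ffun j => u j && y j].
Proof. by rewrite /wt2 /dot; apply: eq_bigr => j _; rewrite ffunE. Qed.

Lemma wt2_ev i : wt2 (ev i) = true.
Proof.
rewrite /wt2 (bigD1 i) //= ffunE eqxx big1 // => j ji.
by rewrite ffunE (negbTE ji).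
Qed.

Lemma perfect_close (C : {set bvec n}) c1 c2 a b : perfect C -> c1 \in C -> c2 \in C ->
  vadd c1 c2 = vadd (ev a) (ev b) -> c1 = c2.
Proof.
move=> PC c1C c2C E.
pose x := vadd c1 (ev a).
have E2 : x = vadd c2 (ev b).
  apply/ffunP => j; have := congr1 (fun f : bvec n => f j) E; rewrite !ffunE => E'.
  by move: E'; case: (c1 j); case: (c2 j); case: (j == a); case: (j == b).
have H1 (c : bvec n) d : hdist (vadd c (ev d)) c <= 1.
  rewrite /hdist; apply: leq_trans (_ : #|[set d]| <= 1); last by rewrite cards1.
  apply: subset_leq_card; apply/subsetP => j; rewrite !inE !ffunE.
  by case: (c j); case: (j == d).
have /cards1P [c0 Ec0] := introT eqP (PC x).
have : c1 \in [set c in C | hdist x c <= 1] by rewrite inE c1C H1.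
have : c2 \in [set c in C | hdist x c <= 1] by rewrite inE c2C E2 H1.
by rewrite Ec0 !inE => /eqP -> /eqP ->.
Qed.

Lemma ev_eq a b : vadd (ev a) (ev b) = bzero n -> a = b.
Proof.
move=> /(congr1 (fun f : bvec n => f a)); rewrite !ffunE eqxx.
by rewrite addTb => /negbFE/eqP.
Qed.

Lemma vadd_vec3 (a b a' b' : bvec n) c c' :
  vadd (vec3 a c b) (vec3 a' c' b') = vec3 (vadd a a') (c (+) c') (vadd b b').
Proof.
rewrite /vadd; apply/ffunP => t; rewrite ffunE; case: (idxP t) => [j||j];
  by rewrite !(vec3_l, vec3_m, vec3_r, ffunE).
Qed.

Lemma permv_tau_sigma (u : bvec n) pi (A B : bvec n) c :
  permv (tau u * sigma pi)%g (vec3 A c B) =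
  vec3 (permv pi [ffun j => if u j then B j else A j]) c
       (permv pi [ffun j => if u j then A j else B j]).
Proof.
apply: permv_eq => t; rewrite permM.
case: (idxP t) => [j||j].
- rewrite tauL; case uj: (u j);
    by rewrite ?sigmaL ?sigmaR ?vec3_l ?vec3_r permvE ffunE uj.
- by rewrite tauM sigmaM !vec3_m.
- rewrite tauR; case uj: (u j);
    by rewrite ?sigmaL ?sigmaR ?vec3_l ?vec3_r permvE ffunE uj.
Qed.

Lemma key (C : {set bvec n}) lam y' u pi (x y : bvec n) :
  (vadd (vec3 y' (lam y') (bzero n))
     (permv (tau u * sigma pi)%g (vec3 (vadd x y) (wt2 x (+) lam y) x))
     \in vasilev C lam) =
  (vadd y' (permv pi y) \in C) &&
  (lam y' (+) lam y (+) lam (vadd y' (permv pi y)) == dot u y).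
Proof.
rewrite permv_tau_sigma vadd_vec3 mem_vasilev.
set A' := [ffun j => if u j then _ else _].
set B' := [ffun j => if u j then _ else _].
have -> : vadd (vadd y' (permv pi A')) (vadd (bzero n) (permv pi B')) =
          vadd y' (permv pi y).
  apply/ffunP => t; rewrite -(permKV pi t); rewrite !(ffunE, permK).
  by case: (u _); case: (x _); case: (y _); case: (y' _).
have -> : vadd (bzero n) (permv pi B') = permv pi B'.
  by apply/ffunP => t; rewrite !ffunE.
have -> : wt2 (permv pi B') = wt2 x (+) dot u y.
  rewrite wt2_perm dotE -wt2_add; congr wt2; apply/ffunP => j; rewrite !ffunE.
  by case: (u j); case: (x j); case: (y j).
case: (vadd y' (permv pi y) \in C) => //=.
by case: (lam y'); case: (lam y); case: (wt2 x); case: (dot u y); case: (lam _).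
Qed.

End B.

Section C.
Variable n : nat.

Lemma permv_inj m (rho : {perm 'I_m}) : injective (permv rho).
Proof. by move=> a b E; apply/ffunP => t; rewrite -(permvE rho a) E permvE. Qed.

Lemma vadd_inj m (z : bvec m) : injective (vadd z).
Proof.
move=> a b E; apply/ffunP => t; have := congr1 (fun f : bvec m => f t) E.
by rewrite !ffunE; case: (z t); case: (a t); case: (b t).
Qed.

Lemma decomp (t : I2 n) : t != midx n -> exists a, t = lidx a \/ t = ridx a.
Proof. by case: (idxP t) => [a||a] H; [exists a; left| rewrite eqxx in H| exists a; right]. Qed.

Lemma pair_ind (t : I2 n) a : t = lidx a \/ t = ridx a ->
  forall c, (lidx c == t) (+) (ridx c == t) = (c == a).
Proof.
by case=> -> c; rewrite ?lidx_eq ?ridx_eq ?lidx_ridx ?ridx_lidx ?addbF.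
Qed.

Definition idxd (d : 'I_n) (t : I2 n) : 'I_n :=
  match split t with
  | inl j => j
  | inr k => match split k with inl _ => d | inr j => j end
  end.
Lemma idxdL d j : idxd d (lidx j) = j.
Proof. by rewrite /idxd /lidx unsplitK. Qed.
Lemma idxdR d j : idxd d (ridx j) = j.
Proof. by rewrite /idxd /ridx !unsplitK. Qed.

Lemma structure (C : {set bvec n}) lam y' (rho : {perm I2 n}) :
  perfect C -> bzero n \in C -> lam (bzero n) = false -> y' \in C ->
  rho (midx n) = midx n ->
  (forall v, v \in vasilev C lam ->
     vadd (vec3 y' (lam y') (bzero n)) (permv rho v) \in vasilev C lam) ->
  forall i, exists j, (rho (lidx i) = lidx j /\ rho (ridx i) = ridx j) \/
                      (rho (lidx i) = ridx j /\ rho (ridx i) = lidx j).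
Proof.
move=> PC C0 lam0 y'C Hm Hmem i.
pose vi := vec3 (ev i) true (ev i).
have viV : vi \in vasilev C lam.
  rewrite mem_vasilev.
  have -> : vadd (ev i) (ev i) = bzero n by apply/ffunP => j; rewrite !ffunE addbb.
  by rewrite C0 lam0 wt2_ev.
set P := rho (lidx i); set Q := rho (ridx i).
have prE t : permv rho vi t = (t == P) || (t == midx n) || (t == Q).
  rewrite -(permKV rho t) permvE /P /Q -Hm !(inj_eq perm_inj).
  set s := (rho^-1)%g t.
  case: (idxP s) => [a||a];
    by rewrite /vi ?vec3_l ?vec3_m ?vec3_r ?ffunE ?lidx_eq ?ridx_eq ?lidx_ridx
       ?ridx_lidx ?lidx_midx ?ridx_midx ?orbF ?eqxx ?orbT.
have Pm : P != midx n by rewrite /P -Hm (inj_eq perm_inj) lidx_midx.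
have Qm : Q != midx n by rewrite /Q -Hm (inj_eq perm_inj) ridx_midx.
have PQ : P != Q by rewrite /P /Q (inj_eq perm_inj) lidx_ridx.
have [a Pa] := decomp Pm.
have [b Qb] := decomp Qm.
pose w := vadd (vec3 y' (lam y') (bzero n)) (permv rho vi).
have := Hmem _ viV; rewrite -/w (vec3_eta w) mem_vasilev => /andP [YC _].
have oxr t : t != midx n -> ((t == P) || (t == midx n) || (t == Q)) = (t == P) (+) (t == Q).
  move=> tm; rewrite (negbTE tm) orbF.
  by case: (eqVneq t P) => [->|]; rewrite ?(negbTE PQ) //= addFb.
have E : vadd (vadd [ffun j => w (lidx j)] [ffun j => w (ridx j)]) y' = vadd (ev a) (ev b).
  apply/ffunP => c; rewrite /w !(prE, vec3_l, vec3_r, ffunE) !oxr ?lidx_midx ?ridx_midx //.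
  rewrite -(pair_ind Pa c) -(pair_ind Qb c).
  by case: (y' c); case: (lidx c == P); case: (ridx c == P); case: (lidx c == Q);
     case: (ridx c == Q).
have Ey := perfect_close PC YC y'C E.
have ab : a = b.
  apply: ev_eq; rewrite -E Ey; apply/ffunP => j; rewrite !ffunE addbb.
  done.
subst b; exists a.
move: PQ.
by case: Pa => ->; case: Qb => ->; rewrite ?eqxx //; [left|right].
Qed.

End C.

Theorem theorem2 (k n : nat) (C : {set bvec n}) (lam : bvec n -> bool)
    (y' : bvec n) :
  n = 2 ^ k - 1 ->
  perfect C ->
  bzero n \in C ->
  lam (bzero n) = false ->
  y' \in C ->
  forall rho : {perm 'I_(n + (1 + n))},
    rho \in St (midx n) (Rot (vec3 y' (lam y') (bzero n)) (vasilev C lam)) <->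
    exists (pi : {perm 'I_n}) (u : bvec n),
      [/\ pi \in Rot y' C,
          (forall y : bvec n, y \in C ->
             lam y' (+) lam y (+) lam (vadd y' (permv pi y)) = dot u y)
        & rho = (tau u * sigma pi)%g].
Proof.
move=> _ PC C0 lam0 y'C rho.
set z := vec3 y' (lam y') (bzero n).
have injf (r : {perm I2 n}) : injective (fun v => vadd z (permv r v)).
  by move=> a b /vadd_inj /permv_inj.
split.
- rewrite !inE => /andP [HR /eqP Hm].
  have Hmem v : v \in vasilev C lam -> vadd z (permv rho v) \in vasilev C lam.
    by move=> vV; rewrite -(eqP HR); apply: imset_f.
  have cl := structure PC C0 lam0 y'C Hm Hmem.
  pose f i := idxd i (rho (lidx i)).
  have fP i : (rho (lidx i) = lidx (f i) /\ rho (ridx i) = ridx (f i)) \/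
              (rho (lidx i) = ridx (f i) /\ rho (ridx i) = lidx (f i)).
    by rewrite /f; case: (cl i) => j [[-> ->]|[-> ->]]; rewrite ?idxdL ?idxdR; [left|right].
  have f_inj : injective f.
    move=> i1 i2 E.
    case: (fP i1) => [[A1 B1]|[A1 B1]]; case: (fP i2) => [[A2 B2]|[A2 B2]];
      rewrite E in A1 B1.
    + by apply: lidx_inj; apply: (@perm_inj _ rho); rewrite A1 A2.
    + have /perm_inj/eqP := etrans A2 (esym B1); by rewrite lidx_ridx.
    + have /perm_inj/eqP := etrans A2 (esym B1); by rewrite lidx_ridx.
    + by apply: lidx_inj; apply: (@perm_inj _ rho); rewrite A1 A2.
  pose pi := perm f_inj.
  pose u : bvec n := [ffun i => rho (lidx i) == ridx (f i)].
  have Erho : rho = (tau u * sigma pi)%g.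
    apply/permP => t; rewrite permM.
    case: (idxP t) => [i||i].
    + rewrite tauL ffunE; case: (fP i) => [[A B]|[A B]];
        by rewrite A ?lidx_ridx ?eqxx ?sigmaL ?sigmaR permE.
    + by rewrite tauM sigmaM Hm.
    + rewrite tauR ffunE; case: (fP i) => [[A B]|[A B]];
        by rewrite A B ?lidx_ridx ?eqxx ?sigmaL ?sigmaR permE.
  have K y : y \in C -> (vadd y' (permv pi y) \in C) &&
       (lam y' (+) lam y (+) lam (vadd y' (permv pi y)) == dot u y).
    move=> yC; rewrite -(key C lam y' u pi (bzero n) y) -Erho.
    by apply: Hmem; apply: imset2_f.
  exists pi, u; split => //.
  + rewrite inE eqEcard card_imset; last by move=> a b /vadd_inj /permv_inj.
    rewrite leqnn andbT; apply/subsetP => w /imsetP [y yC ->].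
    by case/andP: (K y yC).
  + by move=> y yC; case/andP: (K y yC) => _ /eqP.
- case=> pi [u [HR Hc ->]].
  rewrite !inE permM tauM sigmaM eqxx andbT.
  rewrite eqEcard card_imset // leqnn andbT.
  apply/subsetP => w /imsetP [v vV ->].
  case/imset2P: vV => x y _ yC ->.
  rewrite key; apply/andP; split; last by apply/eqP; apply: Hc.
  by rewrite inE in HR; rewrite -(eqP HR); apply: imset_f.
Qed.
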